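(* Let $\hat H$, $\tilde\tau>0$ and $\Phi$ be as in the context, and let $\alpha,\beta\in\mathbb{R}$ satisfy $|\alpha|+|\beta|<1$. Then every root $w$ of $\Phi(w)=0$ satisfies $\operatorname{Re} w<0$; i.e. the equilibrium is locally asymptotically stable, regardless of the delay kernel and of $\tilde\tau$.
   Context: Let $g:[0,\infty)\to[0,\infty)$ be a probability density with mean $\int_0^\infty t\,g(t)\,dt=1$ (or the Dirac measure at $1$), and let $\hat H(w)=\int_0^\infty g(s)e^{-ws}\,ds$; then $\hat H(0)=1$, $\hat H'(0)=-1$, and $|\hat H(w)|\le 1$ for $\operatorname{Re} w\ge 0$. The delay kernel with mean $\tau>0$ is $h(t)=\tau^{-1}g(t/\tau)$. For a time constant $\bar\tau>0$ put $\tilde\tau=\tau/\bar\tau$. For $\alpha,\beta\in\mathbb{R}$ the (rescaled) characteristic equation of the linearized coupled Wilson–Cowan system is $$\Phi(w):=(w+\tilde\tau)^4-\alpha\,\tilde\tau^2(w+\tilde\tau)^2\hat H(w)^2+\beta\,\tilde\tau^4\hat H(w)^4=0,$$ equivalently $Q(w)^2-\alpha Q(w)+\beta=0$ with $Q(w)=\big(\frac{w+\tilde\tau}{\tilde\tau\hat H(w)}\big)^2$. The equilibrium is locally asymptotically stable iff all roots have negative real part. *)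

(* Defs.v *)
From HB Require Import structures.
From mathcomp Require Import all_boot all_order all_algebra.
From mathcomp Require Import all_classical all_reals all_analysis.
From mathcomp Require Import complex.
Set Implicit Arguments. Unset Strict Implicit. Unset Printing Implicit Defensive.
Import Order.TTheory GRing.Theory Num.Theory.
Local Open Scope ring_scope.
Local Open Scope complex_scope.

Section Defs.
Variable R : realType.
Local Notation mu := (@lebesgue_measure R).

Definition nonneg_half : set R := [set x : R | 0 <= x].

Definition prob_density_mean1 (g : R -> R) : Prop :=
  [/\ measurable_fun nonneg_half g,
      (forall t, 0 <= t -> 0 <= g t),
      (\int[mu]_(t in nonneg_half) (g t)%:E = 1)%E
    & (\int[mu]_(t in nonneg_half) (t * g t)%:E = 1)%E].

(* Laplace transform  \int_0^oo g(s) e^{-w s} ds  of a density, written via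
   e^{-ws} = e^{-Re w s} (cos (Im w s) - i sin (Im w s)) *)
Definition laplace_density (g : R -> R) (w : R[i]) : R[i] :=
  (Rintegral mu nonneg_half (fun s : R => g s * expR (- (complex.Re w : R) * s) * cos ((complex.Im w : R) * s)))
  -i* (Rintegral mu nonneg_half (fun s : R => g s * expR (- (complex.Re w : R) * s) * sin ((complex.Im w : R) * s))).

(* Laplace transform of the Dirac measure at 1 : e^{-w} *)
Definition laplace_dirac1 (w : R[i]) : R[i] :=
  (expR (- complex.Re w) * cos (complex.Im w)) -i* (expR (- complex.Re w) * sin (complex.Im w)).

(* Hh is the Laplace transform \hat H of an admissible kernel (density with
   mean 1, or Dirac at 1), on the closed right half-plane where it is defined *)
Definition is_kernel_transform (Hh : R[i] -> R[i]) : Prop :=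
  (exists g : R -> R, prob_density_mean1 g /\
     forall w : R[i], 0 <= complex.Re w -> Hh w = laplace_density g w)
  \/ (forall w : R[i], 0 <= complex.Re w -> Hh w = laplace_dirac1 w).

Definition Phi (Hh : R[i] -> R[i]) (tt alpha beta : R) (w : R[i]) : R[i] :=
  (w + tt%:C) ^+ 4
  - alpha%:C * tt%:C ^+ 2 * (w + tt%:C) ^+ 2 * Hh w ^+ 2
  + beta%:C * tt%:C ^+ 4 * Hh w ^+ 4.

End Defs.

(* Main.v *)
Require Import Defs.
From HB Require Import structures.
From mathcomp Require Import all_boot all_order all_algebra.
From mathcomp Require Import all_classical all_reals all_analysis.
From mathcomp Require Import complex.
From mathcomp Require Import ring lra.
Import Order.TTheory GRing.Theory Num.Theory.
Local Open Scope ring_scope.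

Section Dens.
Variable R : realType.
Local Notation mu := (@lebesgue_measure R).

Lemma mD : measurable (@nonneg_half R : set (g_sigma_algebraType R.-ocitv.-measurable)).
Proof.
have -> : @nonneg_half R = `[0, +oo[%classic.
  by apply/seteqP; split => x /=; rewrite in_itv /= andbT.
exact: measurable_itv.
Qed.

Lemma dens_bound (g : R -> R) (a b : R) : prob_density_mean1 g -> 0 <= a ->
  (Rintegral mu (@nonneg_half R) (fun s => g s * expR (- a * s) * cos (b * s))) ^+ 2 +
  (Rintegral mu (@nonneg_half R) (fun s => g s * expR (- a * s) * sin (b * s))) ^+ 2 <= 1.
Proof.
move=> [mg g0 int1 _] a0.
set A := Rintegral mu _ (fun s => _ * cos _).
set B := Rintegral mu _ (fun s => _ * sin _).
have ig : mu.-integrable (@nonneg_half R) (EFin \o g).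
  apply/integrableP; split; first exact/measurable_realfun.measurable_EFinP.
  have -> : (\int[mu]_(x in @nonneg_half R) `|(EFin \o g) x|)%E = (\int[mu]_(x in @nonneg_half R) (g x)%:E)%E.
    by apply: eq_integral => x; rewrite inE => Dx /=; rewrite ger0_norm // g0.
  by rewrite int1 ltry.
have intc : forall (F : R -> R) (c : R), measurable_fun (@nonneg_half R) F ->
    (forall s, 0 <= s -> `|F s| <= c * g s) ->
    mu.-integrable (@nonneg_half R) (EFin \o F).
  move=> F c mF hF.
  have icg := integrableZl mD c ig.
  apply: (le_integrable mD _ _ icg); first exact/measurable_realfun.measurable_EFinP.
  move=> x Dx /=; rewrite lee_fin (le_trans (hF x Dx)) //.
  exact: ler_norm.
have e1 : forall s, 0 <= s -> 0 <= expR (- a * s) <= 1.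
  move=> s s0; rewrite expR_ge0 /= expR_le1; nra.
have me : measurable_fun (@nonneg_half R) (fun s : R => expR (- a * s)).
  apply: measurableT_comp; first exact: measurable_realfun.measurable_expR.
  by apply: measurable_realfun.measurable_funM.
have mh : forall h : R -> R, measurable_fun setT h ->
    measurable_fun (@nonneg_half R) (fun s => g s * expR (- a * s) * h (b * s)).
  move=> h ch; apply: measurable_realfun.measurable_funM; first exact: measurable_realfun.measurable_funM.
  apply: measurableT_comp; first exact: ch.
  by apply: measurable_realfun.measurable_funM.
have bh : forall h : R -> R, (forall x, `|h x| <= 1) -> forall s, 0 <= s ->
    `|g s * expR (- a * s) * h (b * s)| <= 1 * g s.
  move=> h hb s s0; rewrite !normrM (ger0_norm (g0 _ s0)) mul1r.
  have /andP[E0 E1] := e1 s s0.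
  rewrite (ger0_norm E0) -{2}(mulr1 (g s)) -mulrA ler_wpM2l ?g0 //.
  by rewrite -(mulr1 1) ler_pM // normr_ge0.
set N := Num.sqrt (A ^+ 2 + B ^+ 2).
have icos := intc _ _ (mh _ (measurable_realfun.continuous_measurable_fun (@continuous_cos R))) (bh _ (fun x => cos_max x)).
have isin := intc _ _ (mh _ (measurable_realfun.continuous_measurable_fun (@continuous_sin R))) (bh _ (fun x => sin_max x)).
have mcos := mh _ (measurable_realfun.continuous_measurable_fun (@continuous_cos R)).
have msin := mh _ (measurable_realfun.continuous_measurable_fun (@continuous_sin R)).
have iZ : forall h : R -> R, measurable_fun setT h -> (forall x, `|h x| <= 1) -> forall k : R,
    mu.-integrable (@nonneg_half R) (EFin \o (fun s => k * (g s * expR (- a * s) * h (b * s)))).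
  move=> h mh' hb k; apply: (intc _ `|k|).
    by apply: measurable_realfun.measurable_funM => //; exact: mh.
  by move=> s s0; rewrite normrM ler_wpM2l //; have := bh h hb s s0; rewrite mul1r.
have iS : mu.-integrable (@nonneg_half R) (EFin \o (fun s =>
     A * (g s * expR (- a * s) * cos (b * s)) + B * (g s * expR (- a * s) * sin (b * s)))).
  apply: (intc _ (`|A| + `|B|)).
    by apply: measurable_realfun.measurable_funD; apply: measurable_realfun.measurable_funM.
  move=> s s0; rewrite mulrDl; apply: (le_trans (ler_normD _ _)).
  apply: lerD; rewrite normrM ler_wpM2l //.
    by have := bh _ (fun x => cos_max x) s s0; rewrite mul1r.
  by have := bh _ (fun x => sin_max x) s s0; rewrite mul1r.
have iNg : mu.-integrable (@nonneg_half R) (EFin \o (fun s => N * g s)).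
  apply: (intc _ `|N|); first by apply: measurable_realfun.measurable_funM.
  by move=> s s0; rewrite normrM (ger0_norm (g0 s s0)).
have N0 : 0 <= N by exact: sqrtr_ge0.
have NN : N ^+ 2 = A ^+ 2 + B ^+ 2 by rewrite sqr_sqrtr // addr_ge0 // sqr_ge0.
have key : A ^+ 2 + B ^+ 2 <= N.
  have -> : A ^+ 2 + B ^+ 2 = Rintegral mu (@nonneg_half R)
     (fun s => A * (g s * expR (- a * s) * cos (b * s)) + B * (g s * expR (- a * s) * sin (b * s))).
    rewrite (RintegralD mD).
    - by rewrite (RintegralZl _ mD icos) (RintegralZl _ mD isin) -/A -/B !expr2.
    - apply: (iZ cos); [exact: measurable_realfun.continuous_measurable_fun (@continuous_cos R)|exact: cos_max].
    - apply: (iZ sin); [exact: measurable_realfun.continuous_measurable_fun (@continuous_sin R)|exact: sin_max].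
  have -> : N = Rintegral mu (@nonneg_half R) (fun s => N * g s).
    by rewrite (RintegralZl _ mD) // /Rintegral int1 /= mulr1.
  apply: (le_Rintegral mD iS iNg).
  move=> s s0.
  have /andP[E0 E1] := e1 s s0.
  have gs0 := g0 s s0.
  have cs := cos2Dsin2 (b * s).
  set c := cos (b * s) in cs *; set si := sin (b * s) in cs *.
  set E := expR (- a * s) in E0 E1 *.
  have X : A * c + B * si <= N.
    have : (A * c + B * si) ^+ 2 <= N ^+ 2.
      rewrite NN; have : (A * c + B * si) ^+ 2 + (A * si - B * c) ^+ 2 = (A ^+ 2 + B ^+ 2) * (c ^+ 2 + si ^+ 2) by ring.
      rewrite cs mulr1 => <-; rewrite lerDl sqr_ge0 //.
    move=> h; nra.
  have : A * (g s * E * c) + B * (g s * E * si) = (g s * E) * (A * c + B * si) by ring.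
  move=> ->.
  apply: (@le_trans _ _ ((g s * E) * N)); first by rewrite ler_wpM2l // mulr_ge0.
  have gN := mulr_ge0 gs0 N0; nra.
rewrite -NN; rewrite -NN in key; nra.
Qed.
End Dens.

Local Open Scope complex_scope.

Lemma sqrt_le1 (R : realType) (v : R) : v <= 1 -> Num.sqrt v <= 1.
Proof. by move=> h; rewrite -sqrtr1 ler_wsqrtr. Qed.

Lemma normC_real (R : realType) (x : R) : `|x%:C| = `|x|%:C.
Proof. by rewrite normc_def /= expr0n addr0 sqrtr_sqr. Qed.

Lemma kernel_bound (R : realType) (Hh : R[i] -> R[i]) (x y : R) :
  is_kernel_transform Hh -> 0 <= x ->
  exists Hn : R, `|Hh (x +i* y)| = Hn%:C /\ 0 <= Hn <= 1.
Proof.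
move=> HK x0; case: HK => [[g [dg eq]] | eq]; rewrite eq //.
- rewrite normc_def /=; eexists; split; first reflexivity.
  rewrite sqrtr_ge0 /=; apply: sqrt_le1; rewrite sqrrN.
  exact: dens_bound.
- rewrite normc_def /=; eexists; split; first reflexivity.
  rewrite sqrtr_ge0 /=; apply: sqrt_le1; rewrite sqrrN !exprMn -mulrDr cos2Dsin2 mulr1.
  have := expR_ge0 (- x); have : expR (- x) <= 1 by rewrite expR_le1 oppr_le0.
  move=> h1 h2; nra.
Qed.

Theorem theorem4 (R : realType) (Hh : R[i] -> R[i]) (tt alpha beta : R) :
  is_kernel_transform Hh -> 0 < tt -> `|alpha| + `|beta| < 1 ->
  forall w : R[i], Phi Hh tt alpha beta w = 0 -> complex.Re w < 0.
Proof.
move=> HK t0 hab [x y] Phi0 /=.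
rewrite ltNge; apply/negP => x0.
have [Hn [HnE /andP[Hn0 Hn1]]] := kernel_bound R Hh x y HK x0.
set w := x +i* y in Phi0 HnE *.
set U := Num.sqrt ((x + tt) ^+ 2 + y ^+ 2).
have UE : `|w + tt%:C| = U%:C by rewrite normc_def /= addr0.
have U0 : 0 <= U by exact: sqrtr_ge0.
have tU : tt <= U.
  have : U ^+ 2 = (x + tt) ^+ 2 + y ^+ 2 by rewrite sqr_sqrtr // addr_ge0 // sqr_ge0.
  move=> h; have := sqr_ge0 y; nra.
have E : (w + tt%:C) ^+ 4 = alpha%:C * tt%:C ^+ 2 * (w + tt%:C) ^+ 2 * Hh w ^+ 2
    - beta%:C * tt%:C ^+ 4 * Hh w ^+ 4.
  transitivity ((w + tt%:C) ^+ 4 - Phi Hh tt alpha beta w); first by rewrite Phi0 subr0.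
  rewrite /Phi; ring.
have Ineq : `|w + tt%:C| ^+ 4 <= `|alpha%:C| * `|tt%:C| ^+ 2 * `|w + tt%:C| ^+ 2 * `|Hh w| ^+ 2
    + `|beta%:C| * `|tt%:C| ^+ 4 * `|Hh w| ^+ 4.
  rewrite -normrX E; apply: le_trans (ler_normB _ _) _; rewrite !normrM le_eqVlt; apply/orP; left; apply/eqP; ring.
rewrite UE HnE !normC_real (ger0_norm (ltW t0)) in Ineq.
rewrite -!rmorphXn -!rmorphM -rmorphD lecR in Ineq.
set P := tt ^+ 2 * Hn ^+ 2.
set Q := U ^+ 2.
have P0 : 0 <= P by rewrite mulr_ge0 // sqr_ge0.
have PQ : P <= Q.
  rewrite /P /Q -[U ^+ 2]mulr1 ler_pM ?sqr_ge0 //.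
    by rewrite lerXn2r // ?nnegrE // ltW.
  by rewrite expr_le1.
have Q0 : 0 < Q by rewrite /Q exprn_gt0 // (lt_le_trans t0 tU).
have Ineq' : Q * Q <= `|alpha| * (P * Q) + `|beta| * (P * P).
  by move: Ineq; rewrite /P /Q; congr (_ <= _); ring.
have f1 : `|alpha| * (P * Q) <= `|alpha| * (Q * Q) by rewrite ler_wpM2l // ler_wpM2r // ltW.
have f2 : `|beta| * (P * P) <= `|beta| * (Q * Q) by rewrite ler_wpM2l // ler_pM.
have QQ : 0 < Q * Q by rewrite mulr_gt0.
nra.
Qed.
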